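(* Let \(G\) be a connected complex reductive group with a fixed Borel subgroup \(B\), maximal torus \(T\subset B\), positive roots \(R^+\), and \(\varpi=\frac12\sum_{\alpha\in R^+}\alpha\); fix a Weyl-invariant scalar product \(\langle\cdot,\cdot\rangle\) on \(\mathfrak{X}(T)\otimes\mathbb{R}\). Let \(X\) be a projective rank one \(G\)-spherical variety with spherical lattice \(M\), let \(\sigma\) be its spherical root if \(X\) is not horospherical and any generator of \(M\) otherwise, and let \(L\) be an ample line bundle on \(X\) with moment polytope \(\Delta_+=\{\chi+t\sigma\mid t\in[s_-,s_+]\}\), where \(\chi\in\Delta_+\) and \(s_-<s_+\). Let \(R_X^+\) be the set of positive roots not vanishing identically on \(\Delta_+\), and set \[P(t)=\prod_{\alpha\in R_X^+}\frac{\langle\alpha,\chi+t\sigma\rangle}{\langle\alpha,\varpi\rangle},\qquad Q(t)=\Big(\sum_{\alpha\in R_X^+}\frac{\langle\alpha,\varpi\rangle}{\langle\alpha,\chi+t\sigma\rangle}\Big)P(t),\] and let \(a\in\mathbb{R}\) be the number such that \(P(s_-)+P(s_+)-\int_{s_-}^{s_+}2(aP(t)-Q(t))\,dt=0\). If \(P(s_+)=0\) (resp. \(P(s_-)=0\)), then \((aP-Q)(t)<0\) for all \(t\in[s_-,s_+]\) sufficiently close to \(s_+\) (resp. \(s_-\)).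
   Context: The moment polytope \(\Delta_+\) of \(L\) is the closure of the set of all \(\lambda/k\in\mathfrak{X}(T)\otimes\mathbb{R}\), where \(\lambda\) runs over weights of \(B\)-stable lines in \(H^0(X,L^{\otimes k})\), \(k\geq1\); it is a segment in an affine line with direction \(M\otimes\mathbb{R}\), contained in the positive Weyl chamber, so \(P\) and \(Q\) are positive on \(]s_-,s_+[\). For non-horospherical \(X\), the spherical root is the generator of \(M\) evaluating negatively on the (unique one-dimensional) cone of the colored fan of \(X\). *)

(* Defs.v *)
From HB Require Import structures.
From mathcomp Require Import all_boot all_order all_algebra.
From mathcomp Require Import all_classical all_reals all_analysis.
Set Implicit Arguments. Unset Strict Implicit. Unset Printing Implicit Defensive.
Import Order.TTheory GRing.Theory Num.Theory.
Local Open Scope ring_scope.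

(* X(T) (x) R is modelled as 'rV[R]_n, with a scalar product given by a
   symmetric positive definite Gram matrix S. *)
Definition ip (R : realType) (n : nat) (S : 'M[R]_n) (u v : 'rV[R]_n) : R :=
  (u *m S *m v^T) 0 0.

Definition is_scalar_product (R : realType) (n : nat) (S : 'M[R]_n) : Prop :=
  S^T = S /\ (forall v : 'rV[R]_n, v != 0 -> 0 < ip S v v).

Definition root_refl (R : realType) (n : nat) (S : 'M[R]_n) (a x : 'rV[R]_n) : 'rV[R]_n :=
  x - ((2 * ip S a x) / ip S a a) *: a.

(* Rs is a (reduced, crystallographic) root system in 'rV_n for the scalar
   product S; S is then automatically invariant under the Weyl group, which
   is generated by the reflections root_refl S a, a in Rs. *)
Definition is_root_system (R : realType) (n : nat) (S : 'M[R]_n)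
    (Rs : seq 'rV[R]_n) : Prop :=
  [/\ uniq Rs /\ (0 : 'rV[R]_n) \notin Rs,
      (forall a, a \in Rs -> - a \in Rs),
      (forall a (c : R), a \in Rs -> c *: a \in Rs -> c = 1 \/ c = -1),
      (forall a b, a \in Rs -> b \in Rs -> root_refl S a b \in Rs) &
      (forall a b, a \in Rs -> b \in Rs -> (2 * ip S a b) / ip S a a \is a Num.int)].

(* Rp is the set of positive roots for some choice of positive system
   (equivalently, of Borel subgroup B containing T). *)
Definition is_positive_system (R : realType) (n : nat) (S : 'M[R]_n)
    (Rs Rp : seq 'rV[R]_n) : Prop :=
  exists v : 'rV[R]_n, (forall a, a \in Rs -> ip S a v != 0) /\
                       Rp = [seq a <- Rs | 0 < ip S a v].

Definition varpi (R : realType) (n : nat) (Rp : seq 'rV[R]_n) : 'rV[R]_n :=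
  2^-1 *: \sum_(a <- Rp) a.

Definition seg_pt (R : realType) (n : nat) (chi sigma : 'rV[R]_n) (t : R) : 'rV[R]_n :=
  chi + t *: sigma.

Definition RX (R : realType) (n : nat) (S : 'M[R]_n) (Rp : seq 'rV[R]_n)
    (chi sigma : 'rV[R]_n) (sm sp : R) : seq 'rV[R]_n :=
  [seq a <- Rp | `[< exists t : R, sm <= t <= sp /\ ip S a (seg_pt chi sigma t) != 0 >] ].

Definition Pdh (R : realType) (n : nat) (S : 'M[R]_n) (Rp : seq 'rV[R]_n)
    (chi sigma : 'rV[R]_n) (sm sp : R) (t : R) : R :=
  \prod_(a <- RX S Rp chi sigma sm sp)
     (ip S a (seg_pt chi sigma t) / ip S a (varpi Rp)).

Definition Qdh (R : realType) (n : nat) (S : 'M[R]_n) (Rp : seq 'rV[R]_n)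
    (chi sigma : 'rV[R]_n) (sm sp : R) (t : R) : R :=
  (\sum_(a <- RX S Rp chi sigma sm sp)
     (ip S a (varpi Rp) / ip S a (seg_pt chi sigma t)))
  * Pdh S Rp chi sigma sm sp t.

(* Main.v *)
Require Import Defs.
From HB Require Import structures.
From mathcomp Require Import all_boot all_order all_algebra.
From mathcomp Require Import all_classical all_reals all_analysis.
From mathcomp Require Import ring lra.
Import Order.TTheory GRing.Theory Num.Theory.
Local Open Scope ring_scope.
Local Open Scope classical_set_scope.

Local Open Scope ring_scope.
Section IP.
Variables (R : realType) (n : nat) (S : 'M[R]_n).
Lemma ipDl u w v : ip S (u + w) v = ip S u v + ip S w v.
Proof. by rewrite /ip !mulmxDl mxE. Qed.
Lemma ipZl c u v : ip S (c *: u) v = c * ip S u v.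
Proof. by rewrite /ip -!scalemxAl mxE. Qed.
Lemma ipNl u v : ip S (- u) v = - ip S u v.
Proof. by rewrite -scaleN1r ipZl mulN1r. Qed.
Lemma ipDr u w v : ip S u (w + v) = ip S u w + ip S u v.
Proof. by rewrite /ip linearD /= mulmxDr mxE. Qed.
Lemma ipZr c u v : ip S u (c *: v) = c * ip S u v.
Proof. by rewrite /ip linearZ /= -scalemxAr mxE. Qed.
Lemma ipNr u v : ip S u (- v) = - ip S u v.
Proof. by rewrite -scaleN1r ipZr mulN1r. Qed.
Lemma ip_sumr u (s : seq 'rV[R]_n) : ip S u (\sum_(b <- s) b) = \sum_(b <- s) ip S u b.
Proof.
elim: s => [|x s IH]; first by rewrite !big_nil /ip linear0 mulmx0 mxE.
by rewrite !big_cons ipDr IH.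
Qed.
Lemma ip_seg a chi sigma t : ip S a (seg_pt chi sigma t) = ip S a chi + t * ip S a sigma.
Proof. by rewrite /seg_pt ipDr ipZr. Qed.
End IP.

Section Root.
Variables (R : realType) (n : nat) (S : 'M[R]_n) (Rs Rp : seq 'rV[R]_n).

Lemma ip_refl_r al x : ip S al al != 0 ->
  ip S al (root_refl S al x) = - ip S al x.
Proof.
move=> h; rewrite /root_refl ipDr ipNr ipZr.
field; done.
Qed.

Lemma refl_invol al x : ip S al al != 0 ->
  root_refl S al (root_refl S al x) = x.
Proof.
move=> h; rewrite {1}/root_refl ip_refl_r // /root_refl.
rewrite mulrN mulNr scaleNr opprK subrK //.
Qed.

Lemma ip_refl_l al x v :
  ip S (root_refl S al x) v = ip S x v - (2 * ip S al x / ip S al al) * ip S al v.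
Proof. by rewrite /root_refl ipDl ipNl ipZl. Qed.

Lemma varpi_pos al : is_scalar_product S -> is_root_system S Rs ->
  is_positive_system S Rs Rp -> al \in Rp -> 0 < ip S al (varpi Rp).
Proof.
move=> [_ Spos] [[uRs n0] _ _ Rrefl _] [v [_ ->]] alP.
have := alP; rewrite mem_filter => /andP[alv alRs].
have aa : 0 < ip S al al.
  by apply: Spos; apply/eqP => e; move: n0; rewrite -e alRs.
have aa0 : ip S al al != 0 by rewrite gt_eqF.
set s := root_refl S al.
rewrite /varpi ipZr ip_sumr pmulr_rgt0 ?invr_gt0 ?ltr0n //.
rewrite (bigID (fun b => 0 < ip S (s b) v)) /=.
set Rp' := [seq _ <- Rs | _].
have uRp : uniq Rp' by rewrite filter_uniq.
have E1 : \sum_(i <- Rp' | 0 < ip S (s i) v) ip S al i = 0.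
  rewrite -big_filter; set s1 := [seq i <- Rp' | 0 < ip S (s i) v].
  have us1 : uniq s1 by rewrite filter_uniq.
  have mem1 y : y \in s1 -> s y \in s1.
    rewrite !mem_filter => /andP[h1 /andP[h2 h3]].
    by rewrite /s refl_invol // h2 h1 Rrefl.
  have pe : perm_eq s1 (map s s1).
    apply: uniq_perm => //.
      rewrite map_inj_uniq // => x y /(congr1 s); rewrite /s !refl_invol //.
    move=> y; apply/idP/idP.
      by move=> /mem1 h; rewrite -(refl_invol al y aa0); apply: map_f.
    by move=> /mapP[x /mem1 h ->].
  have : \sum_(i <- s1) ip S al i = - \sum_(i <- s1) ip S al i.
    rewrite {1}(perm_big _ pe) big_map -sumrN.
    by apply: eq_bigr => i _; rewrite ip_refl_r.
  lra.
rewrite E1 add0r -big_filter.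
set s2 := [seq i <- Rp' | ~~ (0 < ip S (s i) v)].
have als2 : al \in s2.
  rewrite mem_filter alP andbT -leNgt ip_refl_l mulfK //. lra.
have pos y : y \in s2 -> 0 < ip S al y.
  rewrite !mem_filter -leNgt => /andP[h1 /andP[h2 h3]].
  move: h1; rewrite ip_refl_l => h1.
  have k0 : 0 < 2 * ip S al y / ip S al al.
    have h4 : ip S y v <= (2 * ip S al y / ip S al al) * ip S al v by lra.
    have h5 : 0 < (2 * ip S al y / ip S al al) * ip S al v by lra.
    by move: h5; rewrite pmulr_lgt0.
  by move: k0; rewrite -mulrA pmulr_rgt0 // pmulr_lgt0 // invr_gt0.
rewrite (big_rem al) //=.
have h0 := pos _ als2.
have : 0 <= \sum_(y <- rem al s2) ip S al y.
  rewrite big_seq; apply: sumr_ge0 => i /mem_rem /pos /ltW //.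
lra.
Qed.
End Root.

Lemma endgame (R : realType) (a c A B t0 : R) : 0 < c -> A + t0 * B = 0 ->
  exists2 e, 0 < e & forall t, `|t - t0| < e -> 0 < A + t * B -> a < c / (A + t * B).
Proof.
move=> c0 h.
set K := (`|a| + 1) * (`|B| + 1).
have K0 : 0 < K by rewrite /K mulr_gt0 // ltr_pwDr.
exists (c / K); first by rewrite divr_gt0.
move=> t ht hl.
rewrite ltr_pdivlMr //.
have -> : A + t * B = (t - t0) * B by lra.
have h1 : a * ((t - t0) * B) <= `|a| * (`|t - t0| * `|B|).
  by rewrite -!normrM ler_norm.
have h2 : `|t - t0| * K < c by rewrite -ltr_pdivlMr.
have ha := normr_ge0 a. have hb := normr_ge0 B. have hx := normr_ge0 (t - t0).
have : `|a| * (`|t - t0| * `|B|) <= `|t - t0| * K.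
  rewrite /K; nra.
lra.
Qed.

Lemma aff_pos (R : realType) (A B sm sp t1 t : R) : sm < sp -> 0 <= A + sm * B ->
  0 <= A + sp * B -> A + t1 * B != 0 -> sm < t < sp -> 0 < A + t * B.
Proof.
move=> hs h1 h2 /eqP h3 /andP[ht1 ht2].
rewrite ltNge; apply/negP => h4.
have hB1 : B <= 0.
  have : (t - sm) * B <= 0 by lra.
  by rewrite pmulr_rle0 // subr_gt0.
have hB2 : 0 <= B.
  have : 0 <= (sp - t) * B by lra.
  by rewrite pmulr_rge0 // subr_gt0.
have hB : B = 0 by apply/eqP; rewrite eq_le hB1 hB2.
apply: h3; rewrite hB in h1 h2 h4 *; lra.
Qed.

Theorem lemma3p2 (R : realType) (n : nat) (S : 'M[R]_n)
    (Rs Rp : seq 'rV[R]_n) (chi sigma : 'rV[R]_n) (sm sp a : R) :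
  is_scalar_product S ->
  is_root_system S Rs ->
  is_positive_system S Rs Rp ->
  sm < sp ->
  sm <= 0 <= sp ->
  (forall al t, al \in Rp -> sm <= t <= sp -> 0 <= ip S al (seg_pt chi sigma t)) ->
  Pdh S Rp chi sigma sm sp sm + Pdh S Rp chi sigma sm sp sp
    - Rintegral lebesgue_measure `[sm, sp]
        (fun t => 2 * (a * Pdh S Rp chi sigma sm sp t - Qdh S Rp chi sigma sm sp t))
    = 0 ->
  (Pdh S Rp chi sigma sm sp sp = 0 ->
     exists2 e : R, 0 < e & forall t, sp - e < t < sp ->
       a * Pdh S Rp chi sigma sm sp t - Qdh S Rp chi sigma sm sp t < 0) /\
  (Pdh S Rp chi sigma sm sp sm = 0 ->
     exists2 e : R, 0 < e & forall t, sm < t < sm + e ->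
       a * Pdh S Rp chi sigma sm sp t - Qdh S Rp chi sigma sm sp t < 0).
Proof.
move=> HS HR HP hs _ Hnn _.
set F := RX S Rp chi sigma sm sp.
have HF al : al \in F -> al \in Rp by rewrite mem_filter => /andP[].
have Hc al : al \in F -> 0 < ip S al (varpi Rp).
  by move=> /HF alP; exact: (@varpi_pos _ _ S Rs Rp al HS HR HP alP).
have Hl al t : al \in F -> sm < t < sp -> 0 < ip S al (seg_pt chi sigma t).
  move=> alF ht; have := alF; rewrite mem_filter => /andP[hex alP].
  move: hex => /asboolP. move=> [t1 [ht1 hne]].
  rewrite ip_seg; rewrite ip_seg in hne.
  apply: (@aff_pos _ _ _ sm sp t1 t hs _ _ hne ht).
    by rewrite -ip_seg; apply: Hnn => //; rewrite lexx ltW.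
  by rewrite -ip_seg; apply: Hnn => //; rewrite lexx ltW.
have key t al0 : sm < t < sp -> al0 \in F ->
    a < ip S al0 (varpi Rp) / ip S al0 (seg_pt chi sigma t) ->
    a * Pdh S Rp chi sigma sm sp t - Qdh S Rp chi sigma sm sp t < 0.
  move=> ht al0F ha.
  have P0 : 0 < Pdh S Rp chi sigma sm sp t.
    rewrite /Pdh big_seq; apply: prodr_gt0 => i iF.
    by rewrite divr_gt0 ?Hl ?Hc.
  have hsum : ip S al0 (varpi Rp) / ip S al0 (seg_pt chi sigma t) <=
     \sum_(al <- F) (ip S al (varpi Rp) / ip S al (seg_pt chi sigma t)).
    rewrite (big_rem al0) //= lerDl big_seq; apply: sumr_ge0 => i /mem_rem iF.
    by rewrite ltW // divr_gt0 ?Hl ?Hc.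
  rewrite /Qdh -/F.
  move: P0 hsum; set P := Pdh _ _ _ _ _ _ _; set Sm := \sum_(_ <- _) _.
  nra.
have zero t0 : Pdh S Rp chi sigma sm sp t0 = 0 ->
    exists2 al0, al0 \in F & ip S al0 (seg_pt chi sigma t0) = 0.
  move=> /eqP; rewrite /Pdh prodf_seq_eq0 => /hasP[al0 al0F /=].
  rewrite mulf_eq0 invr_eq0 (gt_eqF (Hc _ al0F)) orbF => /eqP h.
  by exists al0.
have fin t0 : (t0 = sm \/ t0 = sp) -> Pdh S Rp chi sigma sm sp t0 = 0 ->
    exists2 e : R, 0 < e & forall t, sm < t < sp -> `|t - t0| < e ->
       a * Pdh S Rp chi sigma sm sp t - Qdh S Rp chi sigma sm sp t < 0.
  move=> _ /zero[al0 al0F]; rewrite ip_seg => h0.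
  have [e e0 He] := @endgame _ a _ _ _ _ (Hc _ al0F) h0.
  exists e => // t ht hd.
  apply: (key t al0 ht al0F); rewrite ip_seg; apply: He => //.
  by rewrite -ip_seg; apply: Hl.
have m1 (x y : R) : Num.min x y <= x by rewrite ge_min lexx.
have m2 (x y : R) : Num.min x y <= y by rewrite ge_min lexx orbT.
split.
- move=> /(fin sp (or_intror erefl))[e e0 He].
  exists (Num.min e (sp - sm)); first by rewrite lt_min e0 subr_gt0.
  move=> t /andP[ht1 ht2].
  have := m1 e (sp - sm); have := m2 e (sp - sm) => h1 h2.
  apply: He; first by apply/andP; split; lra.
  rewrite distrC ger0_norm; lra.
- move=> /(fin sm (or_introl erefl))[e e0 He].
  exists (Num.min e (sp - sm)); first by rewrite lt_min e0 subr_gt0.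
  move=> t /andP[ht1 ht2].
  have := m1 e (sp - sm); have := m2 e (sp - sm) => h1 h2.
  apply: He; first by apply/andP; split; lra.
  rewrite ger0_norm; lra.
Qed.
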